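(* Let $\mathscr P$ be a polymatroid and fix a lexicographic order on $\mathbb N^p$. Then $\displaystyle\sum_{\mathbf n\in I(\mathscr P)}(-1)^{\mathrm{rk}(\mathscr P)-|\mathbf n|}c_{\mathbf n}(\mathscr P)=1$.
   Context: Notation: $[p]=\{1,\dots,p\}$; $\mathbf e_i$ is the $i$th standard basis vector; $\mathbf e_J=\sum_{j\in J}\mathbf e_j$; $|\mathbf n|=n_1+\dots+n_p$; $\le$ is componentwise. Polymatroid: a finite set $\mathscr P\subseteq\mathbb N^p$ that is homogeneous (all $\mathbf u\in\mathscr P$ have the same $|\mathbf u|$, the rank $\mathrm{rk}(\mathscr P)$) and M-convex: for all $\mathbf u,\mathbf v\in\mathscr P$ and $i$ with $u_i>v_i$ there is $j$ with $u_j<v_j$ and $\mathbf u-\mathbf e_i+\mathbf e_j\in\mathscr P$. $I(\mathscr P)=\{\mathbf n\in\mathbb N^p:\mathbf n\le\mathbf u\text{ for some }\mathbf u\in\mathscr P\}$. Lexicographic orders: given a total ordering $\sigma_1,\dots,\sigma_p$ of $[p]$, $\mathbf u\prec\mathbf v$ iff $\mathbf u\neq\mathbf v$ and at the first index (in the order $\sigma_1,\sigma_2,\dots$) where they differ, $\mathbf u$ has the smaller entry. Stalactites: for $\mathbf u\in\mathscr P$, $V\subseteq\mathscr P$, $L(\mathbf u;V)=\{\ell\in[p]:\mathbf u-\mathbf e_\ell+\mathbf e_j\in V\text{ for some }j\}$, $\mathrm{St}(\mathbf u;V)=\{\mathbf u-\mathbf e_J:J\subseteq L(\mathbf u;V)\}$.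 With $\mathscr P=\{\mathbf a_1\prec\dots\prec\mathbf a_r\}$, $c_{\mathbf n}(\mathscr P)$ is the number of $k$ with $\mathbf n\in\mathrm{St}(\mathbf a_k;\{\mathbf a_1,\dots,\mathbf a_{k-1}\})$. *)

(* Defs.v *)
From HB Require Import structures.
From mathcomp Require Import all_boot all_order all_algebra.
From mathcomp Require Import fingroup perm finmap.
Set Implicit Arguments. Unset Strict Implicit. Unset Printing Implicit Defensive.
Import GRing.Theory Num.Theory.
Local Open Scope fset_scope.

(* Vectors in N^p, indexed by 'I_p (coordinate i+1 of the paper is index i). *)
Definition vec (p : nat) := {ffun 'I_p -> nat}.

Definition vsum p (n : vec p) : nat := \sum_(i < p) n i.

Definition vle p (n u : vec p) : bool := [forall i, n i <= u i].

(* u - e_i + e_j (used only when u_i >= 1, so truncation never occurs) *)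
Definition exch p (u : vec p) (i j : 'I_p) : vec p :=
  [ffun k => addn (subn (u k) (k == i)) (k == j)].

Definition homogeneous p (P : {fset vec p}) : Prop :=
  forall u v, u \in P -> v \in P -> vsum u = vsum v.

Definition M_convex p (P : {fset vec p}) : Prop :=
  forall u v, u \in P -> v \in P -> forall i : 'I_p, v i < u i ->
    exists j : 'I_p, u j < v j /\ exch u i j \in P.

Definition polymatroid p (P : {fset vec p}) : Prop :=
  P != fset0 /\ homogeneous P /\ M_convex P.

Definition vzero p : vec p := [ffun => 0%N].

(* rank: the common value of |u|, u in P *)
Definition rk p (P : {fset vec p}) : nat := vsum (head (vzero p) P).

Definition box p (u : vec p) : seq (vec p) :=
  filter (fun n => vle n u)
    (map (fun (f : {ffun 'I_p -> 'I_(\max_(i < p) u i).+1}) => ([ffun i => nat_of_ord (f i)] : vec p))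
       (enum {ffun 'I_p -> 'I_(\max_(i < p) u i).+1})).

Definition Iset p (P : {fset vec p}) : seq (vec p) :=
  undup (flatten [seq box u | u <- P]).

(* Lexicographic order w.r.t. the ordering sigma 0, sigma 1, ..., sigma (p-1) of the indices:
   u < v iff at the first (in this order) index where they differ, u is smaller. *)
Definition lex_lt p (sigma : 'S_p) (u v : vec p) : bool :=
  [exists k : 'I_p, [forall j : 'I_p, (j < k)%N ==> (u (sigma j) == v (sigma j))]
                     && (u (sigma k) < v (sigma k))%N].

Definition Lset p (u : vec p) (V : seq (vec p)) : {set 'I_p} :=
  [set l | [exists j : 'I_p, has (fun v : vec p =>
        [forall i, ((v i)%:Z == (u i)%:Z - (i == l)%:Z + (i == j)%:Z)%R]) V]].

Definition in_St p (n u : vec p) (V : seq (vec p)) : bool :=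
  [exists J : {set 'I_p}, (J \subset Lset u V) &&
     [forall i, ((n i)%:Z == (u i)%:Z - (i \in J)%:Z)%R]].

(* c_n(P) = #{ k : n in St(a_k; {a_1,...,a_{k-1}}) } where a_1 < ... < a_r enumerates P;
   {a_1,...,a_{k-1}} is exactly the set of elements of P lex-smaller than a_k. *)
Definition cnum p (sigma : 'S_p) (P : {fset vec p}) (n : vec p) : nat :=
  count (fun u => in_St n u [seq v <- (P : seq (vec p)) | lex_lt sigma v u]) P.

(* Main.v *)
Require Import Defs.
From HB Require Import structures.
From mathcomp Require Import all_boot all_order all_algebra.
From mathcomp Require Import fingroup perm finmap.
From mathcomp Require Import zify.
Import GRing.Theory Num.Theory.
Set Implicit Arguments. Unset Strict Implicit.

Section Lex.
Variables (p : nat) (sigma : 'S_p).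
Notation lt := (lex_lt sigma).

Lemma lex_irr (u : vec p) : ~~ lt u u.
Proof. by apply/existsP => -[k /andP [_]]; rewrite ltnn. Qed.

Lemma lex_trans (u v w : vec p) : lt u v -> lt v w -> lt u w.
Proof.
move=> /existsP [k1 /andP [/forallP H1 L1]] /existsP [k2 /andP [/forallP H2 L2]].
apply/existsP.
case: (ltngtP k1 k2) => Hk.
- exists k1; apply/andP; split.
    apply/forallP => j; apply/implyP => Hj.
    have := H1 j; rewrite Hj => /eqP ->.
    by have := H2 j; rewrite (ltn_trans Hj Hk) => /eqP ->.
  by have := H2 k1; rewrite Hk => /eqP <-.
- exists k2; apply/andP; split.
    apply/forallP => j; apply/implyP => Hj.
    have := H1 j; rewrite (ltn_trans Hj Hk) => /eqP ->.
    by have := H2 j; rewrite Hj => /eqP ->.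
  by have := H1 k2; rewrite Hk => /eqP ->.
- have Hk' : k1 = k2 by apply: val_inj.
  subst k2; exists k1; apply/andP; split; last exact: ltn_trans L1 L2.
  apply/forallP => j; apply/implyP => Hj.
  have := H1 j; rewrite Hj => /eqP ->.
  by have := H2 j; rewrite Hj => /eqP ->.
Qed.

Lemma lex_total (u v : vec p) : u != v -> lt u v || lt v u.
Proof.
move=> Huv.
have [i Hi] : exists i, u i != v i.
  apply/existsP; apply: contraR Huv => /existsPn H; apply/eqP/ffunP => i.
  by apply/eqP; have := H i; rewrite negbK.
have P0 : u (sigma ((perm_inv sigma) i)) != v (sigma ((perm_inv sigma) i)) by rewrite permKV.
case: (@arg_minnP _ _ (fun k : 'I_p => u (sigma k) != v (sigma k)) (fun k : 'I_p => nat_of_ord k) P0) => k Hk Hmin.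
have Hbef : forall j : 'I_p, (j < k)%N -> u (sigma j) = v (sigma j).
  move=> j Hj; apply/eqP; apply: contraTT Hj => Hne; rewrite -leqNgt.
  exact: Hmin.
case: (ltngtP (u (sigma k)) (v (sigma k))) => Hc.
- apply/orP; left; apply/existsP; exists k; rewrite Hc andbT.
  by apply/forallP => j; apply/implyP => Hj; rewrite Hbef.
- apply/orP; right; apply/existsP; exists k; rewrite Hc andbT.
  by apply/forallP => j; apply/implyP => Hj; rewrite Hbef.
- by rewrite Hc eqxx in Hk.
Qed.

End Lex.
Section Min.
Variables (p : nat) (sigma : 'S_p).
Notation lt := (lex_lt sigma).

Lemma ex_min (s : seq (vec p)) : uniq s -> s != [::] ->
  exists2 m, m \in s & ~~ has (fun v => lt v m) s.
Proof.
move=> Us Hs.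
pose c u := count (fun v => lt v u) s.
have Hex : exists n, has (fun u => c u == n) s.
  have [a Ha] : exists a, a \in s by case: s {Us c} Hs => // a s _; exists a; rewrite inE eqxx.
  by exists (c a); apply/hasP; exists a.
case: (ex_minnP Hex) => n /hasP [m Hm /eqP Hc] Hmin.
exists m => //; apply/hasP => -[v Hv Hvm].
have Hle : (c v + 1 <= c m)%N.
  have E1 : count (predU (fun w => lt w v) (pred1 v)) s <= c m.
    apply: sub_count => w /orP [Hw|/eqP ->] //; exact: lex_trans Hw Hvm.
  have E2 := count_predUI (fun w => lt w v) (pred1 v) s.
  have E3 : count (predI (fun w => lt w v) (pred1 v)) s = 0.
    apply/eqP; rewrite -leqn0 leqNgt -has_count; apply/hasP => -[w _ /andP [H /eqP E]].
    by subst w; rewrite (negbTE (lex_irr sigma v)) in H.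
  have E4 : count (pred1 v) s = 1 by rewrite count_uniq_mem // Hv.
  rewrite E3 E4 addn0 in E2; rewrite /c -E2; exact E1.
have : (n <= c v)%N by apply: Hmin; apply/hasP; exists v.
rewrite -Hc; move: Hle; clearbody c; lia.
Qed.

Lemma count_min (s : seq (vec p)) : uniq s -> s != [::] ->
  count (fun u => ~~ has (fun v => lt v u) s) s = 1.
Proof.
move=> Us Hs; case: (ex_min Us Hs) => m Hm Hmin.
have := count_uniq_mem m Us; rewrite Hm /= => <-.
apply: eq_in_count => u Hu /=; apply/idP/idP => [Hu'|/eqP ->//].
apply: contraT => Hne.
case/orP: (lex_total sigma Hne) => H.
- by move/hasP: Hmin => F; exfalso; apply: F; exists u.
- by move/hasP: Hu' => F; exfalso; apply: F; exists m.
Qed.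
End Min.
Section Alt.
Local Open Scope ring_scope.
Lemma alt_subset (T : finType) (L : {set T}) :
  \sum_(J : {set T} | J \subset L) (-1) ^+ #|J| = (L == set0)%:Z :> int.
Proof.
case: (set_0Vmem L) => [->|[l Hl]].
  rewrite eqxx (big_pred1 set0) ?cards0 // => J; by rewrite subset0.
have -> : (L == set0) = false by apply/negbTE/set0Pn; exists l.
pose t (J : {set T}) := if l \in J then J :\ l else l |: J.
have tK : involutive t.
  move=> J; rewrite /t; case H: (l \in J).
    by rewrite setD11 setD1K.
  by rewrite setU11 setU1K ?H.
set S := \sum_(J | _) _.
have HS : S = - S.
  rewrite {1}/S (reindex_inj (inv_inj tK)) /= /S -sumrN.
  apply: eq_big => J.
    rewrite /t; case: ifP => H.
      apply/idP/idP => Hs.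
        by rewrite -(setD1K H); rewrite subUset sub1set Hl Hs.
      by apply: subset_trans Hs; apply: subsetDl.
    apply/idP/idP => Hs.
      by apply: subset_trans Hs; apply: subsetUr.
    by rewrite subUset sub1set Hl Hs.
  move=> _; rewrite /t; case: ifP => H.
    by rewrite (cardsD1 l J) H exprS mulN1r opprK.
  by rewrite cardsU1 H exprS mulN1r.
have : S + S = 0 by rewrite {2}HS subrr.
move=> H; have -> : S = 0 by lia.
by [].
Qed.
End Alt.
Section Poly.
Variables (p : nat) (sigma : 'S_p).
Notation lt := (lex_lt sigma).
Local Open Scope ring_scope.

Definition nJ (u : vec p) (J : {set 'I_p}) : vec p := [ffun i => (u i - (i \in J))%N].

Lemma L_pos (u : vec p) (V : seq (vec p)) l :
  (forall v, v \in V -> lt v u) -> l \in Lset u V -> (0 < u l)%N.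
Proof.
move=> HV; rewrite inE => /existsP [j /hasP [w Hw /forallP Heq]].
rewrite lt0n; apply/negP => /eqP Hu0.
have Hlj : l = j.
  have := Heq l; rewrite Hu0 eqxx /=; case: (l =P j) => // /eqP/negbTE -> /= /eqP; lia.
subst j.
have Hwu : w = u.
  apply/ffunP => i; have := Heq i; case: (i == l) => /= /eqP; try lia.
by have := HV w Hw; rewrite Hwu (negbTE (lex_irr sigma u)).
Qed.

Lemma R_eq (u : vec p) V (J : {set 'I_p}) (n : vec p) : J \subset Lset u V ->
  (forall v, v \in V -> lt v u) ->
  [forall i, (n i)%:Z == (u i)%:Z - (i \in J)%:Z] = (n == nJ u J).
Proof.
move=> HJ HV; apply/forallP/eqP => [H|->] .
  apply/ffunP => i; rewrite ffunE; have := H i.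
  case Hi: (i \in J) => /eqP /=.
    have := L_pos HV (subsetP HJ i Hi); lia.
  lia.
move=> i; rewrite ffunE; apply/eqP; case Hi: (i \in J) => /=.
  have := L_pos HV (subsetP HJ i Hi); lia.
lia.
Qed.

Lemma vsum_nJ (u : vec p) V (J : {set 'I_p}) : J \subset Lset u V ->
  (forall v, v \in V -> lt v u) ->
  (vsum (nJ u J) + #|J| = vsum u)%N.
Proof.
move=> HJ HV; rewrite /vsum -sum1_card [X in (_ + X)%N]big_mkcond /= -big_split /=.
apply: eq_bigr => i _; rewrite ffunE; case Hi: (i \in J) => /=.
  have := L_pos HV (subsetP HJ i Hi); lia.
lia.
Qed.

Lemma inSt_sum (n u : vec p) V :
  (in_St n u V)%:Z = \sum_(J : {set 'I_p} | J \subset Lset u V)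
     ([forall i, (n i)%:Z == (u i)%:Z - (i \in J)%:Z])%:Z.
Proof.
have Uq : forall J1 J2 : {set 'I_p},
    [forall i, (n i)%:Z == (u i)%:Z - (i \in J1)%:Z] ->
    [forall i, (n i)%:Z == (u i)%:Z - (i \in J2)%:Z] -> J1 = J2.
  move=> J1 J2 /forallP H1 /forallP H2; apply/setP => i.
  have := H1 i; have := H2 i.
  by case: (i \in J1); case: (i \in J2) => // /eqP -> /eqP; lia.
rewrite /in_St; case: existsP => [[J0 /andP [HJ0 HR0]]|Hn].
  rewrite (bigD1 J0) //= HR0 big1 ?addr0 // => J /andP [HJ Hne].
  case HR: [forall i, _] => //.
  by rewrite (Uq _ _ HR HR0) eqxx in Hne.
rewrite big1 // => J HJ; case HR: [forall i, _] => //.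
by exfalso; apply: Hn; exists J; rewrite HJ HR.
Qed.

Lemma sum_uniq (s : seq (vec p)) (F : vec p -> int) a :
  uniq s -> a \in s -> \sum_(x <- s) F x * (x == a)%:Z = F a.
Proof.
elim: s => // x s IH /= /andP [Hx Us]; rewrite inE big_cons => /orP [/eqP Eax|Ha].
  subst a; rewrite eqxx mulr1 big_seq big1 ?addr0 // => y Hy.
  have -> : (y == x) = false by apply/negbTE; apply: contraNneq Hx => <-.
  by rewrite mulr0.
have -> : (x == a) = false by apply/negbTE; apply: contraNneq Hx => ->.
by rewrite mulr0 add0r IH.
Qed.

End Poly.
Section Poly2.
Variables (p : nat) (sigma : 'S_p) (P : {fset vec p}).
Notation lt := (lex_lt sigma).
Notation V u := [seq v <- (P : seq (vec p)) | lex_lt sigma v u].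

Lemma Iset_mem u n : u \in P -> vle n u -> n \in Iset P.
Proof.
move=> Hu Hn; rewrite /Iset mem_undup; apply/flatten_mapP; exists u => //.
rewrite /box mem_filter Hn /=; apply/mapP.
exists [ffun i => inord (n i) : 'I_(\max_(i < p) u i).+1]; first by rewrite mem_enum.
apply/ffunP => i; rewrite !ffunE inordK //.
rewrite ltnS; apply: leq_trans (leq_bigmax i).
by move/forallP: Hn.
Qed.

Lemma V_lt u v : v \in V u -> lt v u.
Proof. by rewrite mem_filter => /andP []. Qed.

Lemma Lset_empty u : M_convex P -> u \in P ->
  (Lset u (V u) == set0) = ~~ has (fun v => lt v u) P.
Proof.
move=> Hmc Hu; apply/idP/idP.
  apply: contraLR => /negPn/hasP [v Hv Hvu]; apply/set0Pn.
  case/existsP: Hvu => k /andP [/forallP Hbef Hk].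
  case: (Hmc u v Hu Hv (sigma k) Hk) => j [Huj Hex].
  have Hij : sigma k != j by apply/eqP => E; rewrite -E in Huj; have := ltn_trans Huj Hk; rewrite ltnn.
  exists (sigma k); rewrite inE; apply/existsP; exists j; apply/hasP.
  exists (exch u (sigma k) j).
    rewrite mem_filter Hex andbT; apply/existsP; exists k; apply/andP; split.
      apply/forallP => j'; apply/implyP => Hj'; rewrite ffunE.
      have Hne1 : (sigma j' == sigma k) = false.
        apply/negbTE; apply: contraTneq Hj' => /perm_inj ->; by rewrite ltnn.
      have Hne2 : (sigma j' == j) = false.
        apply/negbTE; apply/eqP => E; have := Hbef j'; rewrite Hj' E => /eqP E'; by rewrite E' ltnn in Huj.
      by rewrite Hne1 Hne2 subn0 addn0.
    rewrite ffunE eqxx (negbTE Hij) addn0; lia.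
  apply/forallP => t; rewrite ffunE; apply/eqP.
  case: (t =P sigma k) => [->|_] /=; first by rewrite (negbTE Hij) /=; lia.
  lia.
move=> Hn; apply/eqP/setP => l; rewrite inE in_set0.
have -> : V u = [::].
  apply/eqP; apply/negPn; rewrite -has_filter; exact: Hn.
by apply/existsP => -[j].
Qed.
End Poly2.
Lemma count_int (T : Type) (a : pred T) (s : seq T) :
  ((count a s)%:Z = \sum_(x <- s) (a x)%:Z)%R.
Proof. elim: s => [|x s IH]; first by rewrite big_nil. by rewrite big_cons /= PoszD IH. Qed.

Unset Implicit Arguments.
Local Open Scope ring_scope.
Theorem mainTheorem9 (p : nat) (P : {fset vec p}) (sigma : 'S_p) :
  polymatroid P ->
  \sum_(n <- Iset P) (-1) ^+ (rk P - vsum n)%N * ((cnum sigma P n)%:Z) = 1 :> int.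
Proof.
move=> [HP0 [Hhom Hmc]].
have memP : forall x, (x \in P) = (x \in (P : seq (vec p))) by [].
have Hh : head (vzero p) P \in P.
  move/fset0Pn: HP0 => [x]; rewrite !memP.
  by case: (P : seq (vec p)) => // a s _; rewrite /= inE eqxx.
have Hrk : forall u, u \in P -> vsum u = rk P by move=> u Hu; exact: Hhom.
have Tu : forall u, u \in P ->
  \sum_(n <- Iset P) (-1) ^+ (rk P - vsum n)%N
      * (in_St n u [seq v <- (P : seq (vec p)) | lex_lt sigma v u])%:Z
  = (~~ has (fun v => lex_lt sigma v u) P)%:Z.
  move=> u Hu.
  under eq_bigr do rewrite inSt_sum mulr_sumr.
  rewrite exchange_big /= -(Lset_empty sigma Hmc Hu) -alt_subset.
  apply: eq_bigr => J HJ.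
  under eq_bigr do rewrite (R_eq _ HJ (@V_lt p sigma P u)).
  rewrite sum_uniq ?undup_uniq //; last first.
    apply: (Iset_mem Hu); apply/forallP => i; rewrite ffunE; exact: leq_subr.
  congr (_ ^+ _); have := vsum_nJ HJ (@V_lt p sigma P u); rewrite (Hrk u Hu); lia.
rewrite (eq_bigr (fun n => \sum_(u <- (P : seq (vec p))) (-1) ^+ (rk P - vsum n)%N
      * (in_St n u [seq v <- (P : seq (vec p)) | lex_lt sigma v u])%:Z)); last first.
  by move=> n _; rewrite /cnum count_int mulr_sumr.
rewrite exchange_big /= big_seq (eq_bigr _ Tu) -big_seq -count_int count_min ?fset_uniq //.
Qed.
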